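(* Let $k$ be a field of characteristic $0$, $R=k[x_1,\dots,x_n]$ acting on $S=k[X_1,\dots,X_n]$ by differentiation ($x_i\circ F=\partial F/\partial X_i$), and let $\ell=x_1+\dots+x_n$. For any monomial $M\in S$ and any integer $d\ge 0$, the Artinian Gorenstein algebra $R/\operatorname{Ann}(\ell^d\circ M)$ has the strong Lefschetz property. In particular, for every elementary symmetric polynomial $e_d(X_1,\dots,X_n)$, $0\le d\le n$, the algebra $R/\operatorname{Ann}(e_d(X_1,\dots,X_n))$ has the strong Lefschetz property.
   Context: For $B\subseteq S$, $\operatorname{Ann}(B)=\{f\in R\mid f\circ b=0\ \forall b\in B\}$. For a homogeneous $F\in S$, $R/\operatorname{Ann}(F)$ is the Artinian Gorenstein algebra with dual generator $F$. A graded Artinian $k$-algebra $A$ has the strong Lefschetz property if there exists $\ell\in A_1$ such that for all $i$ and $j\ge0$ the multiplication map $\cdot\ell^j\colon A_i\to A_{i+j}$ is injective or surjective. *)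

(* Defs.v *)
From HB Require Import structures.
From mathcomp Require Import all_boot all_order all_algebra.
From mathcomp Require Import mpoly.
Set Implicit Arguments. Unset Strict Implicit. Unset Printing Implicit Defensive.
Import Order.TTheory GRing.Theory.
Local Open Scope ring_scope.

(* Apolarity (contraction) action of R = k[x_1..x_n] on S = k[X_1..X_n]:
   x^m o F = d^m F / dX^m, extended linearly. Both rings are {mpoly k[n]}. *)
Definition contract {n : nat} {k : fieldType} (f F : {mpoly k[n]}) : {mpoly k[n]} :=
  \sum_(m <- msupp f) f@_m *: mderivm m F.

Definition inAnn {n : nat} {k : fieldType} (F f : {mpoly k[n]}) : Prop :=
  contract f F = 0.

(* A = R/Ann(F), graded by degree: A_i = R_i / Ann(F)_i.
   Multiplication by L^j : A_i -> A_{i+j}. *)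
Definition mult_injective {n : nat} {k : fieldType} (F L : {mpoly k[n]}) (i j : nat) : Prop :=
  forall f : {mpoly k[n]}, f \is i.-homog -> inAnn F (L ^+ j * f) -> inAnn F f.

Definition mult_surjective {n : nat} {k : fieldType} (F L : {mpoly k[n]}) (i j : nat) : Prop :=
  forall g : {mpoly k[n]}, g \is (i + j)%N.-homog ->
    exists2 f : {mpoly k[n]}, f \is i.-homog & inAnn F (g - L ^+ j * f).

Definition SLP_Ann {n : nat} {k : fieldType} (F : {mpoly k[n]}) : Prop :=
  exists2 L : {mpoly k[n]}, L \is 1.-homog &
    forall i j : nat, mult_injective F L i j \/ mult_surjective F L i j.

Definition ell_sum (n : nat) (k : fieldType) : {mpoly k[n]} := \sum_(i < n) 'X_i.

(* Main.v *)
Require Import Defs.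
From HB Require Import structures.
From mathcomp Require Import all_boot all_order all_algebra.
From mathcomp Require Import mpoly.
From mathcomp Require Import ring zify.
Set Implicit Arguments. Unset Strict Implicit. Unset Printing Implicit Defensive.
Import Order.TTheory GRing.Theory.
Local Open Scope ring_scope.

Record sl2 (k : fieldType) (V : lmodType k) (N : nat) (Vs : nat -> V -> Prop)
  (E F : V -> V) : Prop := Sl2 {
  sl_El : forall (a : k) (u v : V), E (a *: u + v) = a *: E u + E v;
  sl_Fl : forall (a : k) (u v : V), F (a *: u + v) = a *: F u + F v;
  sl_V0 : forall s, Vs s 0;
  sl_VD : forall s u v, Vs s u -> Vs s v -> Vs s (u + v);
  sl_VZ : forall s (a : k) v, Vs s v -> Vs s (a *: v);
  sl_VE : forall s v, Vs s v -> Vs s.-1 (E v);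
  sl_VE0 : forall v, Vs 0 v -> E v = 0;
  sl_VF : forall s v, Vs s v -> Vs s.+1 (F v);
  sl_big : forall s v, (N < s)%N -> Vs s v -> v = 0;
  sl_comm : forall s v, Vs s v -> E (F v) - F (E v) = (N%:R - (s.*2)%:R) *: v
}.

Section Lin.
Variables (k : fieldType) (V : lmodType k) (G : V -> V).
Hypothesis Gl : forall (a : k) (u v : V), G (a *: u + v) = a *: G u + G v.
Lemma lin0 : G 0 = 0.
Proof.
have := Gl 1 0 0; rewrite scaler0 addr0 scale1r.
by rewrite -{1}[G 0]addr0 => /addrI /esym.
Qed.
Lemma linD u v : G (u + v) = G u + G v.
Proof. by have := Gl 1 u v; rewrite !scale1r. Qed.
Lemma linZ a u : G (a *: u) = a *: G u.
Proof. by rewrite -[a *: u]addr0 Gl lin0 addr0. Qed.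
Lemma linN u : G (- u) = - G u.
Proof. by rewrite -scaleN1r linZ scaleN1r. Qed.
Lemma linB u v : G (u - v) = G u - G v.
Proof. by rewrite linD linN. Qed.
Lemma lin_sum (I : Type) (r : seq I) (P : pred I) (f : I -> V) :
  G (\sum_(i <- r | P i) f i) = \sum_(i <- r | P i) G (f i).
Proof. exact: (big_morph G linD lin0). Qed.
Lemma iter_lin t : forall (a : k) (u v : V), iter t G (a *: u + v) = a *: iter t G u + iter t G v.
Proof. by elim: t => //= t IH a u v; rewrite IH Gl. Qed.
End Lin.

Section SL2.
Variables (k : fieldType) (V : lmodType k).
Hypothesis char0 : [pchar k] =i pred0.
Variables (N : nat) (Vs : nat -> V -> Prop) (E F : V -> V).
Hypothesis H : sl2 N Vs E F.

Let El := sl_El H.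
Let Fl := sl_Fl H.
Let iEl t := iter_lin El t.
Let iFl t := iter_lin Fl t.

Lemma Vs_sum s (I : Type) (r : seq I) (P : pred I) (f : I -> V) :
  (forall i, P i -> Vs s (f i)) -> Vs s (\sum_(i <- r | P i) f i).
Proof.
move=> h; apply: (big_ind (Vs s)). - exact: (sl_V0 H s).
- move=> x y; exact: (@sl_VD _ _ _ _ _ _ H s x y).
- exact: h.
Qed.

Lemma Vs_N s v : Vs s v -> Vs s (- v).
Proof. by move=> h; rewrite -scaleN1r; apply: (sl_VZ H). Qed.

Lemma Vs_iterF s t v : Vs s v -> Vs (s + t) (iter t F v).
Proof.
move=> h; elim: t => [|t IH]; first by rewrite addn0.
rewrite addnS /=; exact: (sl_VF H IH).
Qed.

Lemma iterE0 t : iter t E 0 = 0.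
Proof. by elim: t => //= t ->; apply: lin0. Qed.

Definition cc (s j : nat) : k := (j.+1)%:R * (N%:R - (s.*2)%:R - j%:R).

Lemma EF_prim s w j : Vs s w -> E w = 0 ->
  E (iter j.+1 F w) = cc s j *: iter j F w.
Proof.
move=> Vw Ew; elim: j => [|j IH].
  have := sl_comm H Vw; rewrite Ew (lin0 Fl) subr0 /= => ->.
  by rewrite /cc subr0 mul1r.
have Vx := Vs_iterF j.+1 Vw.
have := sl_comm H Vx; move/eqP; rewrite subr_eq => /eqP.
rewrite [iter j.+2 F w]/= => ->; rewrite IH (linZ Fl) -/(iter j.+1 F w).
rewrite -scalerDl; congr (_ *: _); rewrite /cc -!mul2n !natrD ?natrM.
rewrite -[(j.+2)%N]addn1 -[(j.+1)%N]addn1 !natrD; ring.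
Qed.

Lemma EiFi s w i m : Vs s w -> E w = 0 ->
  iter i E (iter (m + i) F w) = (\prod_(j < i) cc s (m + j)) *: iter m F w.
Proof.
move=> Vw Ew; elim: i => [|i IH]; first by rewrite big_ord0 scale1r addn0.
rewrite iterSr addnS (EF_prim _ Vw Ew) (linZ (iEl i)) IH scalerA big_ord_recr /=.
by rewrite mulrC.
Qed.

Lemma cc_neq0 s j : (s.*2 + j < N)%N -> cc s j != 0.
Proof.
move=> h; rewrite /cc mulf_neq0 //.
  by move/pcharf0P: char0 => ->.
rewrite -addrA -opprD -natrD -(natrB _ (ltnW h)).
by move/pcharf0P: char0 => ->; rewrite subn_eq0 -ltnNge.
Qed.

Lemma prod_cc_neq0 s m i : (s.*2 + m + i <= N)%N -> \prod_(j < i) cc s (m + j) != 0.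
Proof.
move=> h; rewrite prodf_seq_neq0; apply/allP => j _; apply/implyP => _.
apply: cc_neq0; have := ltn_ord j; lia.
Qed.

Lemma EjFm_zero s w j m : Vs s w -> E w = 0 -> (m < j)%N -> iter j E (iter m F w) = 0.
Proof.
move=> Vw Ew lt; have h := @EiFi s w m 0 Vw Ew; rewrite add0n /= in h.
rewrite -(subnK (ltnW lt)) iterD h (linZ (iEl _)).
have -> : (j - m = (j - m).-1.+1)%N by rewrite prednK // subn_gt0.
by rewrite iterSr Ew iterE0 scaler0.
Qed.

Lemma decomp s v : (s.*2 <= N)%N -> Vs s v ->
  exists w : nat -> V, (forall i, (i <= s)%N -> Vs (s - i) (w i) /\ E (w i) = 0) /\
     v = \sum_(i < s.+1) iter i F (w i).
Proof.
elim: s v => [|s IH] v hs Vv.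
  exists (fun _ => v); split; last by rewrite big_ord1.
  by move=> i; rewrite leqn0 => /eqP ->; split => //; apply: (sl_VE0 H).
have VEv := sl_VE H Vv; have [|w [Hw Ev]] := IH _ _ VEv; first lia.
pose a i := (cc (s - i) i)^-1.
pose x := \sum_(i < s.+1) a i *: iter i.+1 F (w i).
have ccn i : (i <= s)%N -> cc (s - i) i != 0 by move=> ?; apply: cc_neq0; lia.
have Ex : E x = E v.
  rewrite Ev (lin_sum El); apply: eq_bigr => i _.
  have [Vwi Ewi] := Hw i (ltn_ord i).
  by rewrite (linZ El) (EF_prim _ Vwi Ewi) scalerA mulVf ?scale1r // ccn // -ltnS.
have Vx : Vs s.+1 x.
  apply: Vs_sum => i _; apply: (sl_VZ H); have [Vwi _] := Hw i (ltn_ord i).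
  by have := Vs_iterF i.+1 Vwi; rewrite addnS subnK // -ltnS.
exists (fun i => if i is i'.+1 then a i' *: w i' else v - x); split.
  case=> [|i] hi; first by split; [apply: (sl_VD H) => //; apply: Vs_N | rewrite (linB El) Ex subrr].
  have [Vwi Ewi] := Hw i hi; split; first by rewrite subSS; apply: (sl_VZ H).
  by rewrite (linZ El) Ewi scaler0.
rewrite big_ord_recl /=.
suff -> : \sum_(i < s.+1) iter (lift ord0 i) F (a i *: w i) = x by rewrite subrK.
by apply: eq_bigr => i _; rewrite lift0 /= (linZ (iFl i)) (linZ Fl).
Qed.

Lemma Finj s t v : (s.*2 + t <= N)%N -> Vs s v -> iter t F v = 0 -> v = 0.
Proof.
move=> hst Vv; have [|w [Hw ->]] := decomp _ Vv; first lia.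
rewrite (lin_sum (iFl t)) => hsum.
suff hK : forall K, (K <= s.+1)%N -> \sum_(i < K) iter t F (iter i F (w i)) = 0 ->
   forall i, (i < K)%N -> w i = 0.
  have h0 := hK _ (leqnn _) hsum.
  by apply: big1 => i _; rewrite h0 // (lin0 (iFl i)).
elim => [|K IH] hK; first by [].
rewrite big_ord_recr /= => hs.
have [VwK EwK] := Hw K (hK).
have wK : w K = 0.
  have := congr1 (iter (t + K) E) hs; rewrite (iterE0) (linD (iEl _)) (lin_sum (iEl _)).
  rewrite big1 ?add0r; last first.
    move=> i _; have [Vwi Ewi] := Hw i (leq_trans (ltnW (ltn_ord i)) hK).
    by rewrite -iterD; apply: EjFm_zero Vwi Ewi _; rewrite ltn_add2l.
  have h := @EiFi (s - K) (w K) (t + K) 0 VwK EwK; rewrite add0n /= in h.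
  rewrite -iterD h => /eqP.
  rewrite scaler_eq0 => /orP [|/eqP //].
  by rewrite (negbTE (prod_cc_neq0 _)) //; lia.
move=> i; rewrite ltnS leq_eqVlt => /orP [/eqP -> //|]; apply: IH; first lia.
by move: hs; rewrite wK (lin0 (iFl K)) (lin0 (iFl t)) addr0.
Qed.

Lemma Esurj s t w : (t <= s)%N -> (s.*2 <= N + t)%N -> Vs (s - t) w ->
  exists2 v, Vs s v & iter t E v = w.
Proof.
move=> ts hs Vw; have [|u [Hu ->]] := decomp _ Vw; first lia.
pose p (i : nat) := \prod_(j < t) cc (s - t - i) (i + j).
exists (\sum_(i < (s - t).+1) (p i)^-1 *: iter (i + t) F (u i)).
  apply: Vs_sum => i _; apply: (sl_VZ H); have [Vui _] := Hu i (ltn_ord i).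
  by have := Vs_iterF (i + t) Vui; rewrite addnA subnK ?subnK // -ltnS.
rewrite (lin_sum (iEl t)); apply: eq_bigr => i _.
have [Vui Eui] := Hu i (ltn_ord i).
rewrite (linZ (iEl t)) (EiFi _ _ Vui Eui) scalerA mulVf ?scale1r //.
apply: prod_cc_neq0; have := ltn_ord i; lia.
Qed.

End SL2.

Section Swap.
Variables (k : fieldType) (V : lmodType k).
Variables (N : nat) (Vs : nat -> V -> Prop) (E F : V -> V).
Hypothesis H : sl2 N Vs E F.

Definition Vsw (s : nat) (v : V) : Prop := if (s <= N)%N then Vs (N - s) v else v = 0.

Lemma sl2_swap : sl2 N Vsw F E.
Proof.
have F0 := lin0 (sl_Fl H); have E0 := lin0 (sl_El H).
split; rewrite /Vsw.
- exact: sl_Fl H.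
- exact: sl_El H.
- by move=> s; case: ifP => _ //; apply: (sl_V0 H).
- by move=> s u v; case: ifP => _; [apply: (sl_VD H) | move=> -> ->; rewrite addr0].
- by move=> s a v; case: ifP => _; [apply: (sl_VZ H) | move=> ->; rewrite scaler0].
- move=> [|s] v /=.
    rewrite ?leq0n ?subn0 => Vv; rewrite (sl_big H (ltnSn N) (sl_VF H Vv)).
    exact: (sl_V0 H).
  case: ifP => hs; last by move=> ->; rewrite F0; case: ifP => _ //; apply: (sl_V0 H).
  rewrite (ltnW hs) => Vv; have := sl_VF H Vv; congr Vs; lia.
- by move=> v; rewrite ?leq0n ?subn0 => Vv; apply: (sl_big H (ltnSn N) (sl_VF H Vv)).
- move=> s v; case: ifP => hs; last by move=> ->; rewrite E0; case: ifP => _ //; apply: (sl_V0 H).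
  move=> Vv; case: ifP => hs1.
    by have := sl_VE H Vv; congr Vs; lia.
  have eN : s = N by lia.
  by move: Vv; rewrite eN subnn => /(sl_VE0 H).
- by move=> s v hs; case: ifP => // h; lia.
- move=> s v; case: ifP => hs; last by move=> ->; rewrite F0 E0 !scaler0 subr0.
  move/(sl_comm H)/(congr1 -%R); rewrite opprB => ->.
  rewrite -scaleNr; congr (_ *: _); rewrite -!mul2n !natrM natrB //; ring.
Qed.

Lemma Einj (char0 : [pchar k] =i pred0) s t v : (N + t <= s.*2)%N -> Vs s v -> iter t E v = 0 -> v = 0.
Proof.
move=> h Vv; case: (leqP s N) => hs; last by move=> _; exact: (sl_big H hs Vv).
apply: (Finj char0 sl2_swap (s := N - s)); first lia.
by rewrite /Vsw leq_subr subKn.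
Qed.
End Swap.

Section Lext.
Variables (k : fieldType) (n : nat).
Implicit Types (p q : {mpoly k[n]}).

Definition lext (h : 'X_{1..n} -> {mpoly k[n]}) p : {mpoly k[n]} :=
  \sum_(m <- msupp p) p@_m *: h m.

Lemma lextE h p (r : seq 'X_{1..n}) : uniq r -> {subset msupp p <= r} ->
  lext h p = \sum_(m <- r) p@_m *: h m.
Proof.
move=> ur sub; rewrite (bigID (fun m => m \in msupp p)) /=.
rewrite [X in _ + X]big1 ?addr0; last first.
  by move=> m /memN_msupp_eq0 ->; rewrite scale0r.
rewrite -big_filter /lext; apply: perm_big.
apply: uniq_perm; [exact: msupp_uniq | exact: filter_uniq |].
by move=> m; rewrite mem_filter; case: (boolP (m \in msupp p)) => // /sub ->.
Qed.

Lemma lext_lin h (a : k) p q : lext h (a *: p + q) = a *: lext h p + lext h q.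
Proof.
pose r := undup (msupp p ++ msupp q ++ msupp (a *: p + q)).
have ur : uniq r by apply: undup_uniq.
have s1 : {subset msupp p <= r} by move=> m mi; rewrite mem_undup !mem_cat mi.
have s2 : {subset msupp q <= r} by move=> m mi; rewrite mem_undup !mem_cat mi orbT.
have s3 : {subset msupp (a *: p + q) <= r} by move=> m mi; rewrite mem_undup !mem_cat mi !orbT.
rewrite (lextE h ur s1) (lextE h ur s2) (lextE h ur s3) scaler_sumr -big_split /=.
by apply: eq_bigr => m _; rewrite mcoeffD mcoeffZ scalerDl scalerA.
Qed.

Lemma lextX h m : lext h 'X_[m] = h m.
Proof. by rewrite /lext msuppX big_seq1 mcoeffX eqxx scale1r. Qed.

Lemma lext_mon h p : lext h p = \sum_(m <- msupp p) p@_m *: lext h 'X_[m].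
Proof. by apply: eq_bigr => m _; rewrite lextX. Qed.

End Lext.

Section Contract.
Variables (k : fieldType) (n : nat).
Implicit Types (p q f g P Q : {mpoly k[n]}).

Lemma contractE f P : contract f P = lext (fun m => mderivm m P) f.
Proof. by []. Qed.

Lemma contract_linf P (a : k) f g : contract (a *: f + g) P = a *: contract f P + contract g P.
Proof. by rewrite !contractE lext_lin. Qed.

Lemma contract_linF f (a : k) P Q : contract f (a *: P + Q) = a *: contract f P + contract f Q.
Proof.
rewrite /contract scaler_sumr -big_split /=; apply: eq_bigr => m _.
by rewrite mderivmD mderivmZ scalerDr !scalerA mulrC.
Qed.

Lemma contractX m P : contract 'X_[m] P = mderivm m P.
Proof. by rewrite contractE lextX. Qed.

Lemma contract1 P : contract 1 P = P.
Proof. by rewrite -mpolyX0 contractX mderivm0m. Qed.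

Lemma contractM f g P : contract (f * g) P = contract f (contract g P).
Proof.
have Lf := @contract_linf P.
rewrite {1}[f]mpolyE big_distrl /= (lin_sum Lf) [RHS]contractE lext_mon.
apply: eq_bigr => a _; rewrite -scalerAl (linZ Lf) lextX /=; congr (_ *: _).
rewrite {1}[g]mpolyE big_distrr /= (lin_sum Lf) [in RHS]contractE /lext.
rewrite linear_sum; apply: eq_bigr => b _.
rewrite -scalerAr (linZ Lf) -mpolyXD contractX linearZ /=; congr (_ *: _).
by rewrite addmC mderivmDm.
Qed.

Definition ell := ell_sum n k.

Lemma iter_ell r P : iter r (contract ell) P = contract (ell ^+ r) P.
Proof.
elim: r => [|r IH] /=; first by rewrite expr0 contract1.
by rewrite IH exprS contractM.
Qed.

Lemma ellX b : contract ell 'X_[b] = \sum_(i < n) (b i)%:R *: 'X_[b - U_(i)].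
Proof.
rewrite /ell /ell_sum (lin_sum (@contract_linf _)); apply: eq_bigr => i _.
by rewrite contractX mderivmU1m mderivX.
Qed.

Lemma ell_homog : ell \is 1.-homog.
Proof.
rewrite /ell /ell_sum; apply: rpred_sum => i _.
by rewrite dhomogX /= mdeg1.
Qed.

End Contract.

Section Concrete.
Variables (k : fieldType) (n : nat) (M : 'X_{1..n}).
Implicit Types (p q f g P Q : {mpoly k[n]}).

Definition VS (s : nat) P : Prop := P \is s.-homog /\ (forall m, m \in msupp P -> (m <= M)%MM).

Definition Fm (b : 'X_{1..n}) : {mpoly k[n]} :=
  \sum_(i < n) ((M i)%:R - (b i)%:R) *: 'X_[b + U_(i)].
Definition FF := lext Fm.
Definition EE := contract (ell k n).

Lemma VS0 s : VS s 0.
Proof. by split; [apply: rpred0 | move=> m; rewrite msupp0]. Qed.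

Lemma VSD s P Q : VS s P -> VS s Q -> VS s (P + Q).
Proof.
move=> [hP sP] [hQ sQ]; split; first exact: rpredD.
by move=> m /msuppD_le; rewrite mem_cat => /orP [/sP|/sQ].
Qed.

Lemma VSZ s (a : k) P : VS s P -> VS s (a *: P).
Proof.
move=> [hP sP]; split; first exact: rpredZ.
by move=> m /msuppZ_le /sP.
Qed.

Lemma VS_sum s (I : Type) (r : seq I) (Pr : pred I) (F : I -> {mpoly k[n]}) :
  (forall i, Pr i -> VS s (F i)) -> VS s (\sum_(i <- r | Pr i) F i).
Proof.
move=> h; apply: (big_ind (VS s)); [exact: VS0 | move=> ? ?; exact: VSD | exact: h].
Qed.

Lemma VSX s b : (b <= M)%MM -> mdeg b = s -> VS s 'X_[b].
Proof.
move=> bM db; split; first by rewrite dhomogX /= db.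
by move=> m; rewrite msuppX mem_seq1 => /eqP ->.
Qed.

Lemma VS_mon s P : VS s P -> P = \sum_(b <- msupp P) P@_b *: 'X_[b] /\
   (forall b, b \in msupp P -> (b <= M)%MM /\ mdeg b = s).
Proof.
move=> [hP sP]; split; first exact: mpolyE.
by move=> b bP; split; [exact: sP | exact: (dhomog_mf hP bP)].
Qed.

Lemma VS_lin (G : {mpoly k[n]} -> {mpoly k[n]}) s s' P :
  (forall (a : k) u v, G (a *: u + v) = a *: G u + G v) ->
  (forall b, (b <= M)%MM -> mdeg b = s -> VS s' (G 'X_[b])) ->
  VS s P -> VS s' (G P).
Proof.
move=> Gl h /VS_mon [eP hb]; rewrite {1}eP (lin_sum Gl); apply: VS_sum => b _.
case: (boolP (b \in msupp P)) => [bP|/memN_msupp_eq0 ->].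
  by have [bM db] := hb b bP; rewrite (linZ Gl); apply: VSZ; apply: h.
by rewrite scale0r (lin0 Gl); apply: VS0.
Qed.

Lemma eq_lin (G1 G2 : {mpoly k[n]} -> {mpoly k[n]}) s P :
  (forall (a : k) u v, G1 (a *: u + v) = a *: G1 u + G1 v) ->
  (forall (a : k) u v, G2 (a *: u + v) = a *: G2 u + G2 v) ->
  (forall b, (b <= M)%MM -> mdeg b = s -> G1 'X_[b] = G2 'X_[b]) ->
  VS s P -> G1 P = G2 P.
Proof.
move=> G1l G2l h /VS_mon [eP hb]; rewrite {1 2}eP (lin_sum G1l) (lin_sum G2l).
apply: eq_big_seq => b bP; have [bM db] := hb b bP.
by rewrite (linZ G1l) (linZ G2l) h.
Qed.

Lemma EEl (a : k) u v : EE (a *: u + v) = a *: EE u + EE v.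
Proof. exact: contract_linF. Qed.

Lemma FFl (a : k) u v : FF (a *: u + v) = a *: FF u + FF v.
Proof. exact: lext_lin. Qed.

Lemma mdeg_le (m m' : 'X_{1..n}) : (m <= m')%MM -> (mdeg m <= mdeg m')%N.
Proof. by move=> h; rewrite -(submK h) mdegD leq_addl. Qed.

Lemma mdegBU (b : 'X_{1..n}) (i : 'I_n) : b i != 0%N -> mdeg (b - U_(i)) = (mdeg b).-1.
Proof.
rewrite -lep1mP => h; rewrite -{2}(submK h) mdegD mdeg1 addn1 //.
Qed.

Lemma VSE s P : VS s P -> VS s.-1 (EE P).
Proof.
apply: VS_lin; first exact: EEl.
move=> b bM db; rewrite /EE ellX; apply: VS_sum => i _.
case: (eqVneq (b i) 0%N) => [->|bi]; first by rewrite scale0r; apply: VS0.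
apply: VSZ; apply: VSX; last by rewrite mdegBU // db.
exact: lepm_trans (lem_subr _ _) bM.
Qed.

Lemma VSE0 P : VS 0 P -> EE P = 0.
Proof.
move=> VP; rewrite (@eq_lin EE (fun _ => 0) 0 P) //; first exact: EEl.
  by move=> *; rewrite scaler0 addr0.
move=> b _ /eqP; rewrite mdeg_eq0 => /eqP ->; rewrite /EE ellX.
by apply: big1 => i _; rewrite mnm0E scale0r.
Qed.

Lemma VSF s P : VS s P -> VS s.+1 (FF P).
Proof.
apply: VS_lin; first exact: FFl.
move=> b bM db; rewrite /FF lextX /Fm; apply: VS_sum => i _.
case: (eqVneq (b i) (M i)) => [->|bi]; first by rewrite subrr scale0r; apply: VS0.
apply: VSZ; apply: VSX; last by rewrite mdegD mdeg1 db addn1.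
apply/mnm_lepP => j; rewrite mnmDE mnm1E; have := mnm_lepP bM j.
case: (eqVneq i j) => [<-|]; last by rewrite addn0.
by rewrite addn1 ltn_neqAle bi.
Qed.

Lemma VSbig s P : (mdeg M < s)%N -> VS s P -> P = 0.
Proof.
move=> hs [hP sP]; case E: (msupp P) => [|m r]; first exact: msuppnil0.
have mP : m \in msupp P by rewrite E mem_head.
have := mdeg_le (sP _ mP); rewrite (dhomog_mf hP mP) /=; lia.
Qed.

Lemma comm_mon (b : 'X_{1..n}) : (b <= M)%MM ->
  EE (FF 'X_[b]) - FF (EE 'X_[b]) = ((mdeg M)%:R - ((mdeg b).*2)%:R) *: 'X_[b].
Proof.
move=> bM.
have T : forall i j : 'I_n,
  ((M i)%:R - (b i)%:R) *: (((b + U_(i))%MM j)%:R *: 'X_[b + U_(i) - U_(j)])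
  - (b j)%:R *: (((M i)%:R - ((b - U_(j))%MM i)%:R) *: 'X_[b - U_(j) + U_(i)])
  = ((i == j)%:R * ((M i)%:R - ((b i).*2)%:R)) *: ('X_[b] : {mpoly k[n]}).
  move=> i j; rewrite !mnmDE !mnmBE !mnm1E.
  case: (eqVneq i j) => [<-|ij].
    rewrite /= addmK mul1r addn1 subn1 !scalerA.
    case: (eqVneq (b i) 0%N) => [->|bi].
      by rewrite mul0r scale0r subr0 /= !subr0 mulr1.
    rewrite submK ?lep1mP // -scalerBl; congr (_ *: _).
    rewrite -subn1 natrB ?lt0n // -mul2n natrM -addn1 natrD; ring.
  rewrite /= mul0r scale0r addn0 subn0.
  case: (eqVneq (b j) 0%N) => [->|bj]; first by rewrite !scale0r scaler0 subrr.
  have -> : (b + U_(i) - U_(j) = b - U_(j) + U_(i))%MM.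
    apply/mnmP => l; rewrite !(mnmDE, mnmBE, mnm1E).
    case: (eqVneq i l) => [il|il]; case: (eqVneq j l) => [jl|jl] //=; try lia.
    by move: ij; rewrite il jl eqxx.
  by rewrite !scalerA mulrC subrr.
have hF c : FF 'X_[c] = \sum_(i < n) ((M i)%:R - (c i)%:R) *: 'X_[c + U_(i)].
  by rewrite /FF lextX.
have hE c : EE 'X_[c] = \sum_(i < n) (c i)%:R *: 'X_[c - U_(i)] by apply: ellX.
rewrite hF (lin_sum EEl) hE (lin_sum FFl).
under eq_bigr do rewrite (linZ EEl) hE scaler_sumr.
under [X in _ - X]eq_bigr do rewrite (linZ FFl) hF scaler_sumr.
rewrite [X in _ - X]exchange_big /= -sumrB.
under eq_bigr do rewrite -sumrB.
under eq_bigr do under eq_bigr do rewrite T.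
under eq_bigr => i _.
  rewrite -scaler_suml -big_distrl /= (bigD1 i) //= eqxx big1 ?addr0 ?mul1r; last first.
    by move=> j /negbTE; rewrite eq_sym => ->.
  over.
rewrite -scaler_suml; congr (_ *: _).
rewrite sumrB (mdegE M) (mdegE b) !natr_sum -!mul2n; congr (_ - _).
rewrite natrM natr_sum big_distrr /=; apply: eq_bigr => i _.
by rewrite -natrM mul2n.
Qed.

Lemma comm_VS s P : VS s P -> EE (FF P) - FF (EE P) = ((mdeg M)%:R - (s.*2)%:R) *: P.
Proof.
apply: (eq_lin (G1 := fun P => EE (FF P) - FF (EE P)) (G2 := fun P => ((mdeg M)%:R - (s.*2)%:R) *: P)).
- by move=> a u v; rewrite !(EEl, FFl) scalerBr addrACA opprD.
- by move=> a u v; rewrite scalerDr !scalerA mulrC.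
- by move=> b bM db; rewrite comm_mon // db.
Qed.

Lemma sl2_conc : sl2 (mdeg M) VS EE FF.
Proof.
split.
- exact: EEl.
- exact: FFl.
- exact: VS0.
- exact: VSD.
- exact: VSZ.
- exact: VSE.
- exact: VSE0.
- exact: VSF.
- exact: VSbig.
- exact: comm_VS.
Qed.

End Concrete.

Section Link.
Variables (k : fieldType) (n : nat) (M : 'X_{1..n}).
Hypothesis char0 : [pchar k] =i pred0.
Implicit Types (p q f g P Q : {mpoly k[n]}).

Lemma mderivmXM (a : 'X_{1..n}) : ('X_[M] : {mpoly k[n]})^`M[a] =
  if (a <= M)%MM then (\prod_(l < n) (M l)^_(a l))%:R *: 'X_[M - a] else 0.
Proof.
rewrite mderivmX; case: ifP => // /negbT h.
case: (pickP (fun l => M l < a l)%N) => [l hl|hn]; last first.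
  exfalso; move/negP: h; apply; apply/mnm_lepP => l; have := hn l; rewrite ltnNge.
  by move/negbFE.
by rewrite (bigD1 l) //= ffact_small // mul0n scale0r.
Qed.

Lemma contract_XM f i : f \is i.-homog ->
  VS M (mdeg M - i) (contract f 'X_[M]) /\ ((mdeg M < i)%N -> contract f 'X_[M] = 0).
Proof.
move=> hf; rewrite /contract; split.
  rewrite big_seq; apply: VS_sum => a aP; apply: VSZ; rewrite mderivmXM.
  case: ifP => aM; last exact: VS0.
  apply: VSZ; apply: VSX; first exact: lem_subr.
  have := dhomog_mf hf aP; rewrite /= => da.
  by rewrite -{2}(submK aM) mdegD da addnK.
move=> hi; apply: big1_seq => a /andP [_ aP]; rewrite mderivmXM; case: ifP => aM; last by rewrite scaler0.
have := mdeg_le aM; rewrite (dhomog_mf hf aP) /=; lia.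
Qed.

Lemma natr_neq0 (m : nat) : (0 < m)%N -> (m%:R : k) != 0.
Proof. by move=> h; move/pcharf0P: char0 => ->; rewrite -lt0n. Qed.

Lemma VS_contract s P : (s <= mdeg M)%N -> VS M s P ->
  exists2 f, f \is (mdeg M - s).-homog & contract f 'X_[M] = P.
Proof.
move=> hs VP; have [eP hb] := VS_mon VP.
pose cb (b : 'X_{1..n}) : k := (\prod_(l < n) (M l)^_((M - b)%MM l))%:R.
have cbn b : cb b != 0.
  apply: natr_neq0; rewrite prodn_gt0 // => l; rewrite ffact_gt0 mnmBE leq_subr //.
exists (\sum_(b <- msupp P) (P@_b / cb b) *: 'X_[M - b]).
  rewrite big_seq; apply: rpred_sum => b bP; apply: rpredZ; rewrite dhomogX /=.
  have [bM db] := hb b bP; apply/eqP.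
  by rewrite -db -{2}(submK bM) mdegD addnK.
rewrite (lin_sum (@contract_linf _ _ _)) [RHS]eP; apply: eq_big_seq => b bP.
have [bM _] := hb b bP.
rewrite (linZ (@contract_linf _ _ _)) contractX mderivmXM lem_subr scalerA.
rewrite submBA // addmC addmK divfK //.
Qed.

Lemma iterEE0 t : iter t (@EE k n) 0 = 0.
Proof. by elim: t => //= t' ->; rewrite /EE; exact: (lin0 (@contract_linF k n _)). Qed.

Lemma iterVS s t v : VS M s v -> VS M (s - t) (iter t (@EE k n) v).
Proof.
move=> Vv; elim: t => [|t IH]; first by rewrite subn0.
by rewrite subnS /=; apply: VSE.
Qed.

Lemma iter_big0 s t v : VS M s v -> (s < t)%N -> iter t (@EE k n) v = 0.
Proof.
move=> Vv st; rewrite -(subnK st) iterD /= (@VSE0 _ _ M).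
  by elim: (t - s.+1)%N => //= t' ->; rewrite /EE; exact: (lin0 (@contract_linF k n _)).
by have := iterVS s Vv; rewrite subnn.
Qed.

Lemma SLP_main d : SLP_Ann (contract (ell_sum n k ^+ d) 'X_[M]).
Proof.
set G := contract _ _; set N := mdeg M.
have H := sl2_conc k M.
have key j f : contract (ell_sum n k ^+ j * f) G = iter (j + d) (@EE k n) (contract f 'X_[M]).
  by rewrite /G -contractM mulrAC -exprD contractM /EE iter_ell.
have key0 f : contract f G = iter d (@EE k n) (contract f 'X_[M]).
  by have := key 0%N f; rewrite expr0 mul1r add0n.
exists (ell_sum n k); first exact: (ell_homog k n).
move=> i j.
case: (ltnP N i) => hi.
  left => f hf _; rewrite /inAnn key0 (contract_XM hf).2 //.
  exact: iterEE0.
case: (leqP (N + (j + d)) (N - i).*2) => hs.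
  left => f hf; rewrite /inAnn key key0 => h0.
  have [Vf _] := contract_XM hf.
  by rewrite (Einj H char0 hs Vf h0) iterEE0.
right => g hg; have [Vg g0] := contract_XM hg.
case: (ltnP N (i + j)) => hij.
  exists 0; first exact: rpred0.
  by rewrite /inAnn mulr0 subr0 key0 g0 // iterEE0.
case: (ltnP (N - i) (j + d)) => hjd.
  exists 0; first exact: rpred0.
  rewrite /inAnn mulr0 subr0 key0; apply: (iter_big0 Vg); lia.
have Vg' : VS M ((N - i) - (j + d)) (iter d (@EE k n) (contract g 'X_[M])).
  by have := iterVS d Vg; congr VS; lia.
have [|v Vv hv] := Esurj char0 H hjd _ Vg'; first lia.
have [|f hf hfv] := VS_contract _ Vv; first exact: leq_subr.
exists f; first by rewrite subKn in hf.
by rewrite /inAnn (linB (@contract_linf k n G)) key0 key hfv hv subrr.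
Qed.

End Link.

Section Mesym.
Variables (k : fieldType) (n : nat).
Hypothesis char0 : [pchar k] =i pred0.
Implicit Types (p q f g P Q : {mpoly k[n]}).

Lemma SLP_scale (G : {mpoly k[n]}) (c : k) : c != 0 -> SLP_Ann G -> SLP_Ann (c *: G).
Proof.
move=> c0 [L hL HL].
have eq f : inAnn (c *: G) f <-> inAnn G f.
  rewrite /inAnn (linZ (contract_linF f)).
  by split => [/eqP|->]; rewrite ?scaler0 // scaler_eq0 (negbTE c0) => /eqP.
exists L => // i j; case: (HL i j) => [inj|surj].
  by left => f hf /eq /(inj f hf) /eq.
right => g hg; have [f hf hA] := surj g hg; exists f => //; exact/eq.
Qed.

Lemma ell_sumE P : contract (ell k n) P = \sum_(i < n) mderiv i P.
Proof.
rewrite /ell /ell_sum (lin_sum (@contract_linf _ _ _)); apply: eq_bigr => i _.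
by rewrite contractX mderivmU1m.
Qed.

Lemma ell_mesym d : (d < n)%N -> contract (ell k n) (mesym n k d.+1) = (n - d)%:R *: mesym n k d.
Proof.
move=> dn; apply/mpolyP => m; rewrite ell_sumE raddf_sum mcoeffZ mcoeff_mesym /=.
under eq_bigr do rewrite mcoeff_mderiv mcoeff_mesym.
case: (boolP (mechar d m)) => hm; last first.
  rewrite mulr0; apply: big1 => i _.
  suff -> : mechar d.+1 (m + U_(i)) = false by rewrite mul0rn.
  apply/negP => /andP [/eqP hd /forallP hl].
  move/negP: hm; apply; apply/andP; split.
    by apply/eqP; move: hd; rewrite mdegD mdeg1 addn1 => -[].
  by apply/forallP => l; apply: leq_trans (hl l); rewrite mnmDE leq_addr.
move: hm => /andP [/eqP hd /forallP hl]; rewrite mulr1.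
have t i : (mechar d.+1 (m + U_(i)))%:R *+ (m i).+1 = ((m i == 0)%N%:R : k).
  case: (eqVneq (m i) 0%N) => mi /=.
    rewrite mi /=; suff -> : mechar d.+1 (m + U_(i)) by [].
    rewrite /mechar mdegD mdeg1 hd addn1 eqxx /=.
    apply/forallP => l; rewrite mnmDE mnm1E; case: (eqVneq i l) => [<-|_]; first by rewrite mi.
    by rewrite addn0 hl.
  have -> : mechar d.+1 (m + U_(i)) = false.
    apply/negP => /andP [_ /forallP /(_ i)]; rewrite mnmDE mnm1E eqxx; lia.
  by rewrite mul0rn.
under eq_bigr do rewrite t.
rewrite -natr_sum; congr (_%:R).
have h1 : (\sum_(i < n) ((m i == 0)%N + m i) = n)%N.
  rewrite -[RHS]card_ord -sum1_card; apply: eq_bigr => i _; have := hl i; case: (m i) => [|[|]] //.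
move: h1; rewrite big_split /= -mdegE hd; lia.
Qed.

Lemma ell_pow_en r : (r <= n)%N -> contract (ell k n ^+ r) (mesym n k n) = (r`!)%:R *: mesym n k (n - r).
Proof.
elim: r => [|r IH] hr; first by rewrite expr0 contract1 scale1r subn0.
rewrite exprS contractM IH ?(ltnW hr) // (linZ (@contract_linF k n _)).
have e : (n - r = (n - r.+1).+1)%N by lia.
rewrite e ell_mesym; last by lia.
rewrite scalerA -natrM; congr (_%:R *: _); rewrite factS mulnC; congr (_ * _)%N; lia.
Qed.

Lemma mesym_nE : mesym n k n = 'X_[\sum_(i < n) U_(i)].
Proof. by rewrite mesymnnE mprodXE. Qed.

End Mesym.

Unset Implicit Arguments.
Theorem mainTheorem5 (k : fieldType) (n : nat) (char0 : [pchar k] =i pred0) :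
  (forall (M : 'X_{1..n}) (d : nat),
      SLP_Ann (contract (ell_sum n k ^+ d) 'X_[M])) /\
  (forall d : nat, (d <= n)%N -> SLP_Ann (mesym n k d)).
Proof.
split; first by move=> M d; apply: SLP_main.
move=> d dn.
have h := @ell_pow_en k n (n - d)%N (leq_subr d n); rewrite subKn // in h.
have fn : ((n - d)`!%:R : k) != 0 by apply: natr_neq0 => //; exact: fact_gt0.
have -> : mesym n k d = ((n - d)`!%:R)^-1 *: contract (ell_sum n k ^+ (n - d)) 'X_[\sum_(i < n) U_(i)].
  by rewrite -mesym_nE; rewrite /ell in h; rewrite h scalerA mulVf ?scale1r.
by apply: SLP_scale; [rewrite invr_eq0 | apply: SLP_main].
Qed.
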